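(* Let $\mu_4$ be the $4$-fold convolution of the standard middle-third Cantor measure, i.e. the self-similar measure with $d=3$, $m=4$, $(p_0,\dots,p_4)=\tfrac1{16}(1,4,6,4,1)$. Then $$\alpha_4^*:=\sup\left(\Delta\mu_4\setminus\{4\log2/\log3\}\right)=\frac{\log(16/5)}{\log3},$$ and this value is attained as the local dimension of $\mu_4$ at $x=1/2$.
   Context: Given integers $d\ge3$, $m\ge d$ and a probability vector $(p_0,\dots,p_m)$, the associated self-similar measure is the unique compactly supported Borel probability measure $\mu$ with $\mu(A)=\sum_{i=0}^m p_i\,\mu(dA-i)$ for all Borel $A$. The standard Cantor measure is the one with $d=3$, $m=1$, $p_0=p_1=1/2$ (supported on $[0,1/2]$ in this normalization); its $4$-fold convolution is the self-similar measure with $d=3$, $m=4$, $p_i=\binom4i/16$. $\Delta\mu$ is the set of values $\dim\mu(x)=\lim_{r\to0^+}\log\mu(B(x,r))/\log r$ over $x\in\operatorname{supp}\mu$ where this limit exists; for $\mu_4$ the maximal element of $\Delta\mu_4$ is $4\log2/\log3$. *)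

(* Defs.v *)
(* R : realType carries its Borel sigma-algebra
   (generated by the intervals ]a,b]), see lebesgue_stieltjes_measure.v. *)
From HB Require Import structures.
From mathcomp Require Import all_boot all_order all_algebra.
From mathcomp Require Import all_classical all_reals all_analysis.
Set Implicit Arguments. Unset Strict Implicit. Unset Printing Implicit Defensive.
Import Order.TTheory GRing.Theory Num.Theory.
Import numFieldNormedType.Exports.
Local Open Scope classical_set_scope.
Local Open Scope ring_scope.

Definition self_similar_measure {R : realType} (d m : nat) (p : nat -> R)
    (mu : {measure set R -> \bar R}) : Prop :=
  [/\ mu setT = 1%E,
      (exists K : set R, compact K /\ mu (~` K) = 0%E) &
      forall A : set R, measurable A ->
        mu A = (\sum_(0 <= i < m.+1) (p i)%:E * mu [set (d%:R * a - i%:R)%R | a in A])%E].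

Definition msupp {R : realType} (mu : {measure set R -> \bar R}) : set R :=
  [set x | forall r : R, 0 < r -> (0 < mu (ball x r))%E].

Definition has_locdim {R : realType} (mu : {measure set R -> \bar R}) (x l : R)
  : Prop :=
  (fun r : R => ln (fine (mu (ball x r))) / ln r) @ (0:R)^'+ --> l.

Definition locdim_set {R : realType} (mu : {measure set R -> \bar R}) : set R :=
  [set l | exists2 x, msupp mu x & has_locdim mu x l].

(* Main.v *)
Require Import Defs.
From HB Require Import structures.
From mathcomp Require Import all_boot all_order all_algebra.
From mathcomp Require Import all_classical all_reals all_analysis.
From mathcomp Require Import lra ring zify.
Import Order.TTheory GRing.Theory Num.Theory.
Import numFieldNormedType.Exports.
Local Open Scope classical_set_scope.
Local Open Scope ring_scope.
Section An.
Context {R : realType}.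

Lemma lim_le_seq (a : nat -> R) (l al K : R) N0 :
  a n @[n --> \oo] --> l -> (forall n, (N0 <= n)%N -> a n <= al + K * harmonic n) -> l <= al.
Proof.
move=> ha hb.
have hg : (fun n => al + K * harmonic n) n @[n --> \oo] --> al.
  rewrite -[X in _ --> X]addr0; apply: cvgD; first exact: cvg_cst.
  rewrite -(mulr0 K); apply: cvgM; [exact: cvg_cst | exact: cvg_harmonic].
rewrite -(cvg_lim _ ha) // -(cvg_lim _ hg) //.
apply: ler_lim; [by apply/cvg_ex; exists l | by apply/cvg_ex; exists al |].
by exists N0 => // n hn; apply: hb.
Qed.

Lemma lim_ge_seq (a : nat -> R) (l al K : R) N0 :
  a n @[n --> \oo] --> l -> (forall n, (N0 <= n)%N -> al - K * harmonic n <= a n) -> al <= l.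
Proof.
move=> ha hb.
have hg : (fun n => al - K * harmonic n) n @[n --> \oo] --> al.
  rewrite -[X in _ --> X]subr0; apply: cvgB; first exact: cvg_cst.
  rewrite -(mulr0 K); apply: cvgM; [exact: cvg_cst | exact: cvg_harmonic].
rewrite -(cvg_lim _ ha) // -(cvg_lim _ hg) //.
apply: ler_lim; [by apply/cvg_ex; exists al | by apply/cvg_ex; exists l |].
by exists N0 => // n hn; apply: hb.
Qed.

Definition rad n : R := (3^-1) ^+ n.+1.

Lemma rad_gt0 n : 0 < rad n.
Proof. by rewrite /rad exprn_gt0 // invr_gt0. Qed.

Lemma rad_cvg : rad n @[n --> \oo] --> 0.
Proof.
have -> : rad = (fun n => 3^-1 * (3^-1) ^+ n) by apply: funext => n; rewrite /rad exprS.
rewrite -(mulr0 (3^-1 : R)); apply: cvgM; first exact: cvg_cst.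
apply: cvg_expr; rewrite ger0_norm ?invr_ge0 // invf_lt1 //; lra.
Qed.

Lemma ln3_gt0 : 0 < ln (3 : R).
Proof. by apply: ln_gt0; lra. Qed.

Lemma ln_rad n : ln (rad n) = - (n.+1%:R * ln 3).
Proof.
by rewrite /rad lnXn ?invr_gt0 // lnV ?posrE // mulNrn mulr_natl.
Qed.

Lemma A1 (mm : nat -> R) l c be N0 : 0 < c -> 0 < be ->
  (fun n => ln (mm n) / ln (rad n)) n @[n --> \oo] --> l ->
  (forall n, (N0 <= n)%N -> c * be ^+ n.+1 <= mm n) -> l <= - ln be / ln 3.
Proof.
move=> c0 be0 hl hb; apply: (lim_le_seq _ _ _ (- ln c / ln 3) N0 hl) => n hn.
have L0 := ln3_gt0.
have hN : 0 < n.+1%:R :> R by [].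
have hp : 0 < c * be ^+ n.+1 by rewrite mulr_gt0 // exprn_gt0.
have h1 : ln c + n.+1%:R * ln be <= ln (mm n).
  rewrite mulr_natl -(lnXn _ be0) -lnM ?posrE ?exprn_gt0 //.
  by rewrite ler_ln ?posrE ?hb //; apply: (lt_le_trans hp (hb n hn)).
have hD : (ln (rad n))^-1 <= 0 by rewrite ln_rad invr_le0 oppr_le0 mulr_ge0 // ltW.
have := ler_wnM2r hD h1.
have -> : (ln c + n.+1%:R * ln be) * (ln (rad n))^-1 = - ln be / ln 3 + - ln c / ln 3 * harmonic n.
  by rewrite ln_rad /harmonic /=; field; apply/andP; split; apply: lt0r_neq0.
by [].
Qed.

Lemma A2 (mm : nat -> R) l c be N0 : 0 < c -> 0 < be ->
  (fun n => ln (mm n) / ln (rad n)) n @[n --> \oo] --> l ->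
  (forall n, (N0 <= n)%N -> 0 < mm n /\ mm n <= c * be ^+ n.+1) -> - ln be / ln 3 <= l.
Proof.
move=> c0 be0 hl hb; apply: (lim_ge_seq _ _ _ (ln c / ln 3) N0 hl) => n hn.
have L0 := ln3_gt0.
have hN : 0 < n.+1%:R :> R by [].
have hp : 0 < c * be ^+ n.+1 by rewrite mulr_gt0 // exprn_gt0.
have [m0 mb] := hb n hn.
have h1 : ln (mm n) <= ln c + n.+1%:R * ln be.
  rewrite mulr_natl -(lnXn _ be0) -lnM ?posrE ?exprn_gt0 //.
  by rewrite ler_ln ?posrE.
have hD : (ln (rad n))^-1 <= 0 by rewrite ln_rad invr_le0 oppr_le0 mulr_ge0 // ltW.
have := ler_wnM2r hD h1.
have -> : (ln c + n.+1%:R * ln be) * (ln (rad n))^-1 = - ln be / ln 3 - ln c / ln 3 * harmonic n.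
  by rewrite ln_rad /harmonic /=; field; apply/andP; split; apply: lt0r_neq0.
by [].
Qed.

Lemma cvg_core (g : R -> R) al K d : 0 < d -> 0 <= K ->
  (forall r, 0 < r < d -> `|g r - al * ln r| <= K) ->
  (fun r => g r / ln r) r @[r --> 0^'+] --> al.
Proof.
move=> d0 K0 hb; apply/cvgrPdist_lt => e e0.
have E0 : 0 < expR (- (K + 1) / e) by apply: expR_gt0.
near=> r.
have r0 : 0 < r by near: r; exact: nbhs_right_gt.
have rd : r < d by near: r; exact: nbhs_right_lt.
have r1 : r < 1 by near: r; apply: nbhs_right_lt; lra.
have rE : r < expR (- (K + 1) / e) by near: r; exact: nbhs_right_lt.
have lr : ln r < - (K + 1) / e by rewrite -[X in _ < X]expRK ltr_ln ?posrE.
have lr0 : ln r < 0 by apply: ln_lt0; rewrite r0 r1.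
have hk : `|g r - al * ln r| <= K by apply: hb; rewrite r0 rd.
have -> : al - g r / ln r = (g r - al * ln r) / (- ln r).
  by field; rewrite ltr0_neq0.
have hl : 0 < - ln r by lra.
rewrite normrM (ger0_norm (ltW (_ : 0 < (- ln r)^-1))) ?invr_gt0 //.
rewrite ltr_pdivrMr //.
have h2 : (K + 1) / e < - ln r by lra.
move: h2; rewrite -(ltr_pM2r e0) divfK ?gt_eqF // => h3.
lra.
Unshelve. all: by end_near.
Qed.

Lemma alg (N lm lr L A l2 l16 : R) : 0 < L -> 0 < A -> 0 <= l2 -> 0 <= l16 -> 0 <= N ->
  - l16 - (N + 1) * A <= lm -> lm <= l2 - N * A ->
  - ((N + 1) * L) - l2 < lr -> lr <= - (N * L) - l2 ->
  `|lm - A / L * lr| <= l16 + l2 + A + A / L * l2.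
Proof.
move=> L0 A0 l20 l160 N0 h1 h2 h3 h4.
have al0 : 0 < A / L by apply: divr_gt0.
have e1 := ler_pM2l al0; have e2 := ltr_pM2l al0.
have h4' : A / L * lr <= A / L * (- (N * L) - l2) by rewrite ler_pM2l.
have h3' : A / L * (- ((N + 1) * L) - l2) < A / L * lr by rewrite ltr_pM2l.
have E1 : A / L * (- (N * L) - l2) = - (N * A) - A / L * l2 by field; rewrite gt_eqF.
have E2 : A / L * (- ((N + 1) * L) - l2) = - (N * A) - A - A / L * l2 by field; rewrite gt_eqF.
rewrite E1 in h4'; rewrite E2 in h3'.
have p0 : 0 <= A / L * l2 by apply: mulr_ge0 => //; exact: ltW.
rewrite ler_norml; apply/andP; split; lra.
Qed.

Lemma find_step (P : nat -> bool) N : P 0%N -> ~~ P N -> exists n, P n && ~~ P n.+1.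
Proof.
elim: N => [|N IH] h0 hN; first by rewrite h0 in hN.
case: (boolP (P N)) => hP; first by exists N; rewrite hP.
exact: IH.
Qed.

Lemma seq_locdim (mu : {measure set R -> \bar R}) x l : has_locdim mu x l ->
  (fun n => ln (fine (mu (ball x (rad n)))) / ln (rad n)) n @[n --> \oo] --> l.
Proof.
move=> /cvg_at_rightP h; apply: (h rad); split; [exact: rad_gt0 | exact: rad_cvg].
Qed.

Lemma rad_eq n : rad n = (3 ^+ n.+1)^-1.
Proof. by rewrite /rad exprVn. Qed.
End An.

Section S.
Context (R : realType) (mu : {measure set R -> \bar R}).
Hypothesis H : self_similar_measure 3 4 (fun i => ('C(4, i))%:R / 16) mu.

Definition T (i : nat) (A : set R) : set R := [set (3%:R * a - i%:R)%R | a in A].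

Lemma mu_le1 {A : set R} : measurable A -> (mu A <= 1)%E.
Proof. move=> mA; case: H => h1 _ _; rewrite -h1; apply: le_measure => //; rewrite inE //. Qed.

Lemma mu_fin {A : set R} : measurable A -> mu A \is a fin_num.
Proof.
move=> mA; rewrite ge0_fin_numE ?measure_ge0 //.
by rewrite (le_lt_trans (mu_le1 mA)) // ltry.
Qed.

Lemma fine_ge0 A : 0 <= fine (mu A).
Proof. by apply: fine_ge0; apply: measure_ge0. Qed.

Lemma fine_le1 {A : set R} : measurable A -> fine (mu A) <= 1.
Proof.
move=> mA; have := mu_le1 mA; rewrite -(fineK (mu_fin mA)) lee_fin //.
Qed.

Lemma fine_mono A B : measurable A -> measurable B -> A `<=` B -> fine (mu A) <= fine (mu B).
Proof.
move=> mA mB AB; rewrite -lee_fin !fineK ?mu_fin //.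
by apply: le_measure => //; rewrite inE.
Qed.

Lemma eqF A : measurable A -> (forall i, measurable (T i A)) ->
  fine (mu A) = fine (mu (T 0 A)) / 16 + fine (mu (T 1 A)) * 4 / 16 +
     fine (mu (T 2 A)) * 6 / 16 + fine (mu (T 3 A)) * 4 / 16 + fine (mu (T 4 A)) / 16.
Proof.
move=> mA mT; case: H => _ _ /(_ A mA) ->.
rewrite (big_nat_recr 4) // (big_nat_recr 3) // (big_nat_recr 2) // (big_nat_recr 1) // (big_nat_recr 0) // big_geq //.
have e i : mu (T i A) = (fine (mu (T i A)))%:E by rewrite fineK // mu_fin.
rewrite (e 0) (e 1) (e 2) (e 3) (e 4).
rewrite -!EFinM /=.
have -> : 'C(4,2) = 6%N by [].
have -> : 'C(4,3) = 4%N by [].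
rewrite bin1 bin0 binn.
lra.
Qed.

Lemma T_co i (c d : R) : T i `[c, d[%classic = `[3 * c - i%:R, 3 * d - i%:R[%classic.
Proof.
rewrite /T; apply/seteqP; split => [y [a /= ha <-] | y /= hy].
  by move: ha; rewrite !in_itv /= => /andP[h1 h2]; apply/andP; split; lra.
exists ((y + i%:R)/3); last by field.
by move: hy; rewrite !in_itv /= => /andP[h1 h2]; apply/andP; split; lra.
Qed.

Lemma T_cy i (c : R) : T i `[c, +oo[%classic = `[3 * c - i%:R, +oo[%classic.
Proof.
rewrite /T; apply/seteqP; split => [y [a /= ha <-] | y /= hy].
  by move: ha; rewrite !in_itv /= andbT => h1; rewrite andbT; lra.
exists ((y + i%:R)/3); last by field.
by move: hy; rewrite !in_itv /= !andbT => h1; lra.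
Qed.

Lemma T_yc i (c : R) : T i `]-oo, c]%classic = `]-oo, 3 * c - i%:R]%classic.
Proof.
rewrite /T; apply/seteqP; split => [y [a /= ha <-] | y /= hy].
  by move: ha; rewrite !in_itv /= => h1; lra.
exists ((y + i%:R)/3); last by field.
by move: hy; rewrite !in_itv /= => h1; lra.
Qed.

Lemma sub_cy (a b : R) : b <= a -> `[a, +oo[%classic `<=` `[b, +oo[%classic.
Proof. by move=> ba x /=; rewrite !in_itv /= !andbT => h; lra. Qed.

Lemma sub_yc (a b : R) : a <= b -> `]-oo, a]%classic `<=` `]-oo, b]%classic.
Proof. by move=> ba x /=; rewrite !in_itv /= => h; lra. Qed.

Lemma big_pow (M t : R) : 0 < t -> exists n : nat, M < 3 ^+ n * t.
Proof.
move=> t0; have h0 : 0 <= `|M| / t by rewrite divr_ge0 // ltW.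
have [_ h] := andP (truncn_itv h0).
exists (Num.Def.trunc (`|M| / t)).+1.
have h3 : ((Num.Def.trunc (`|M| / t)).+1)%:R <= 3 ^+ (Num.Def.trunc (`|M| / t)).+1 :> R.
  rewrite -natrX ler_nat; apply: ltnW; exact: ltn_expl.
have hM : M <= `|M| by exact: ler_norm.
have : `|M| / t * t < 3 ^+ (Num.Def.trunc (`|M| / t)).+1 * t.
  by rewrite ltr_pM2r //; exact: (lt_le_trans h h3).
by rewrite divfK ?gt_eqF //; lra.
Qed.

Lemma far_null : exists M : R, forall A : set R, measurable A ->
   (forall x, A x -> M < `|x|) -> mu A = 0%E.
Proof.
case: H => _ [K [cK hK]] _.
have [M [Mr HM]] := compact_bounded cK.
exists (`|M| + 1) => A mA hA.
have mK : measurable (~` K).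
  by apply: measurableC; apply: measurable_realfun.closed_measurable; apply: compact_closed => //; exact: hausdorff_normedModType.
apply/eqP; rewrite eq_le measure_ge0 andbT -hK; apply: le_measure; rewrite ?inE //.
move=> x Ax Kx; have := HM (`|M| + 1); rewrite -/(_ > _).
have : M < `|M| + 1 by have := ler_norm M; lra.
move=> lt /(_ lt) /(_ x Kx) /=; have := hA x Ax; lra.
Qed.

Lemma fin0 A : measurable A -> fine (mu A) = 0 -> mu A = 0%E.
Proof. by move=> mA h; rewrite -(fineK (mu_fin mA)) h. Qed.

Lemma right_null : mu `[2, +oo[%classic = 0%E.
Proof.
have [M hM] := far_null.
pose g := fun t : R => fine (mu `[2 + t, +oo[%classic).
have mI (c : R) : measurable `[c, +oo[%classic by apply: measurable_itv.
have step t : 0 <= t -> g t <= g (3 * t).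
  move=> t0; rewrite /g eqF //; last by move=> i; rewrite T_cy.
  rewrite !T_cy.
  have hi (i : nat) : (i <= 4)%N -> fine (mu `[3 * (2 + t) - i%:R, +oo[%classic) <= fine (mu `[2 + 3 * t, +oo[%classic).
    move=> hi; apply: fine_mono => //; apply: sub_cy.
    have : i%:R <= 4 :> R by rewrite (ler_nat R i 4).
    lra.
  have := hi 0%N isT; have := hi 1%N isT; have := hi 2%N isT; have := hi 3%N isT; have := hi 4%N isT.
  lra.
have iter n t : 0 <= t -> g t <= g (3 ^+ n * t).
  move=> t0; elim: n => [|n IH]; first by rewrite expr0 mul1r.
  apply: (le_trans IH); rewrite exprS -mulrA; apply: step.
  by apply: mulr_ge0 => //; apply: exprn_ge0.
have van t : 0 < t -> g t = 0.
  move=> t0; have [n hn] := big_pow M t t0.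
  apply/eqP; rewrite eq_le fine_ge0 andbT.
  apply: (le_trans (iter n t (ltW t0))).
  have hp : 0 <= 3 ^+ n * t by apply: mulr_ge0; [apply: exprn_ge0|apply: ltW].
  rewrite /g; have -> : mu `[2 + 3 ^+ n * t, +oo[%classic = 0%E.
    by apply: hM => // x /=; rewrite in_itv /= andbT => hx; rewrite ger0_norm; lra.
  by [].
apply: fin0 => //.
have mT : forall i, measurable (T i `[2, +oo[%classic) by move=> i; rewrite T_cy.
have E := eqF _ (mI 2) mT; rewrite !T_cy in E.
have hi (i : nat) : (i <= 3)%N -> fine (mu `[3 * 2 - i%:R, +oo[%classic) = 0.
  move=> hi; apply/eqP; rewrite eq_le fine_ge0 andbT.
  rewrite -(van 1 ltr01); apply: fine_mono => //; apply: sub_cy.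
  have : i%:R <= 3 :> R by rewrite (ler_nat R i 3).
  lra.
have e4 : 3 * 2 - 4%:R = 2 :> R by lra.
rewrite e4 (hi 0%N isT) (hi 1%N isT) (hi 2%N isT) (hi 3%N isT) in E.
lra.
Qed.

Lemma left_null : mu `]-oo, 0]%classic = 0%E.
Proof.
have [M hM] := far_null.
pose g := fun t : R => fine (mu `]-oo, - t]%classic).
have mI (c : R) : measurable `]-oo, c]%classic by apply: measurable_itv.
have step t : 0 <= t -> g t <= g (3 * t).
  move=> t0; rewrite /g eqF //; last by move=> i; rewrite T_yc.
  rewrite !T_yc.
  have hi (i : nat) : fine (mu `]-oo, 3 * - t - i%:R]%classic) <= fine (mu `]-oo, - (3 * t)]%classic).
    apply: fine_mono => //; apply: sub_yc.
    have : 0 <= i%:R :> R by [].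
    lra.
  have := hi 0%N; have := hi 1%N; have := hi 2%N; have := hi 3%N; have := hi 4%N.
  lra.
have iter n t : 0 <= t -> g t <= g (3 ^+ n * t).
  move=> t0; elim: n => [|n IH]; first by rewrite expr0 mul1r.
  apply: (le_trans IH); rewrite exprS -mulrA; apply: step.
  by apply: mulr_ge0 => //; apply: exprn_ge0.
have van t : 0 < t -> g t = 0.
  move=> t0; have [n hn] := big_pow M t t0.
  apply/eqP; rewrite eq_le fine_ge0 andbT.
  apply: (le_trans (iter n t (ltW t0))).
  have hp : 0 < 3 ^+ n * t by apply: mulr_gt0 => //; apply: exprn_gt0.
  rewrite /g; have -> : mu `]-oo, - (3 ^+ n * t)]%classic = 0%E.
    by apply: hM => // x /=; rewrite in_itv /= => hx; rewrite ltr0_norm; lra.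
  by [].
apply: fin0 => //.
have mT : forall i, measurable (T i `]-oo, 0]%classic) by move=> i; rewrite T_yc.
have E := eqF _ (mI 0) mT; rewrite !T_yc in E.
have hi (i : nat) : (1 <= i)%N -> fine (mu `]-oo, 3 * 0 - i%:R]%classic) = 0.
  move=> hi; apply/eqP; rewrite eq_le fine_ge0 andbT.
  have h1 : 1 <= i%:R :> R by rewrite (ler_nat R 1 i).
  have : fine (mu `]-oo, 3 * 0 - i%:R]%classic) <= g 1.
    by apply: fine_mono => //; apply: sub_yc; lra.
  by rewrite van.
have e0 : 3 * 0 - 0%:R = 0 :> R by lra.
rewrite e0 (hi 1%N isT) (hi 2%N isT) (hi 3%N isT) (hi 4%N isT) in E.
lra.
Qed.

Definition I (n : nat) (j : int) : set R :=
  `[ j%:~R / 3 ^+ n, (j + 1)%:~R / 3 ^+ n [%classic.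
Definition F n j := fine (mu (I n j)).

Lemma mI n j : measurable (I n j).
Proof. exact: measurable_itv. Qed.

Lemma intrP (m : nat) : (Posz m)%:~R = m%:R :> R.
Proof. by []. Qed.

Lemma TI i n j : T i (I n.+1 j) = I n (j - Posz (i * 3 ^ n)%N).
Proof.
rewrite /I T_co.
have h3 : 3 ^+ n != 0 :> R by apply: lt0r_neq0; apply: exprn_gt0.
have E1 : 3 * (j%:~R / 3 ^+ n.+1) - i%:R = (j - Posz (i * 3 ^ n)%N)%:~R / 3 ^+ n :> R.
  rewrite intrD intrN intrP natrM natrX exprS; field; done.
have E2 : 3 * ((j + 1)%:~R / 3 ^+ n.+1) - i%:R = (j - Posz (i * 3 ^ n)%N + 1)%:~R / 3 ^+ n :> R.
  rewrite !intrD intrN !intrP natrM natrX exprS; field; done.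
by rewrite E1 E2.
Qed.

Lemma F_rec n j : F n.+1 j = F n (j - Posz (0 * 3 ^ n)%N) / 16 + F n (j - Posz (1 * 3 ^ n)%N) * 4 / 16 +
  F n (j - Posz (2 * 3 ^ n)%N) * 6 / 16 + F n (j - Posz (3 * 3 ^ n)%N) * 4 / 16 + F n (j - Posz (4 * 3 ^ n)%N) / 16.
Proof.
rewrite /F (eqF _ (mI _ _)); last by move=> i; rewrite TI; exact: mI.
by rewrite !TI.
Qed.

Lemma F_ge0 n j : 0 <= F n j.
Proof. exact: fine_ge0. Qed.

Lemma F_le1 n j : F n j <= 1.
Proof. exact: fine_le1 (mI n j). Qed.

Lemma Fz n x : (x < 0)%R \/ (Posz (2 * 3 ^ n)%N <= x)%R -> F n x = 0.
Proof.
have h3 : 0 < 3 ^+ n :> R by apply: exprn_gt0.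
move=> hx; apply/eqP; rewrite eq_le F_ge0 andbT.
case: hx => hx.
- have : F n x <= fine (mu `]-oo, 0]%classic).
    apply: fine_mono; rewrite ?mI //; first exact: measurable_itv.
    move=> y /=; rewrite !in_itv /= => /andP[_ hy].
    have hx' : (x + 1 <= 0)%R by lia.
    have h : ((x + 1)%:~R <= (0:int)%:~R :> R) by rewrite ler_int.
    rewrite mulr0z in h. apply: ltW; apply: (lt_le_trans hy); apply: mulr_le0_ge0 => //; rewrite invr_ge0 ltW.
  by rewrite left_null.
- have : F n x <= fine (mu `[2, +oo[%classic).
    apply: fine_mono; rewrite ?mI //; first exact: measurable_itv.
    move=> y /=; rewrite !in_itv /= andbT => /andP[+ _]; rewrite ?bnd_simp => hy.
    apply: (le_trans _ hy); rewrite ler_pdivlMr //.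
    have : (Posz (2 * 3 ^ n)%N)%:~R <= x%:~R :> R by rewrite ler_int.
    by rewrite intrP natrM natrX.
  by rewrite right_null.
Qed.

Ltac zF := repeat match goal with |- context [F ?n (Posz ?a - Posz ?b)] =>
  rewrite (Fz n (Posz a - Posz b)); [|lia] end.

Lemma F0e0 n k : (k < 3 ^ n)%N -> F n.+1 (Posz k) = F n (Posz k) / 16.
Proof.
move=> hk; rewrite F_rec; zF.
rewrite (_ : Posz k - Posz (0 * 3 ^ n)%N = Posz k); [|lia]. lra.
Qed.

Lemma F0e1 n k : (k < 3 ^ n)%N ->
  F n.+1 (Posz (3 ^ n + k)%N) = (F n (Posz k) * 4 + F n (Posz (3 ^ n + k)%N)) / 16.
Proof.
move=> hk; rewrite F_rec; zF.
rewrite (_ : Posz (3 ^ n + k)%N - Posz (0 * 3 ^ n)%N = Posz (3 ^ n + k)%N); [|lia].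
rewrite (_ : Posz (3 ^ n + k)%N - Posz (1 * 3 ^ n)%N = Posz k); [|lia]. lra.
Qed.

Lemma F0e2 n k : (k < 3 ^ n)%N ->
  F n.+1 (Posz (2 * 3 ^ n + k)%N) = (F n (Posz k) * 6 + F n (Posz (3 ^ n + k)%N) * 4) / 16.
Proof.
move=> hk; rewrite F_rec; zF.
rewrite (_ : Posz (2 * 3 ^ n + k)%N - Posz (1 * 3 ^ n)%N = Posz (3 ^ n + k)%N); [|lia].
rewrite (_ : Posz (2 * 3 ^ n + k)%N - Posz (2 * 3 ^ n)%N = Posz k); [|lia]. lra.
Qed.

Lemma F1e0 n k : (k < 3 ^ n)%N ->
  F n.+1 (Posz (3 * 3 ^ n + k)%N) = (F n (Posz k) * 4 + F n (Posz (3 ^ n + k)%N) * 6) / 16.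
Proof.
move=> hk; rewrite F_rec; zF.
rewrite (_ : Posz (3 * 3 ^ n + k)%N - Posz (2 * 3 ^ n)%N = Posz (3 ^ n + k)%N); [|lia].
rewrite (_ : Posz (3 * 3 ^ n + k)%N - Posz (3 * 3 ^ n)%N = Posz k); [|lia]. lra.
Qed.

Lemma F1e1 n k : (k < 3 ^ n)%N ->
  F n.+1 (Posz (4 * 3 ^ n + k)%N) = (F n (Posz k) + F n (Posz (3 ^ n + k)%N) * 4) / 16.
Proof.
move=> hk; rewrite F_rec; zF.
rewrite (_ : Posz (4 * 3 ^ n + k)%N - Posz (3 * 3 ^ n)%N = Posz (3 ^ n + k)%N); [|lia].
rewrite (_ : Posz (4 * 3 ^ n + k)%N - Posz (4 * 3 ^ n)%N = Posz k); [|lia]. lra.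
Qed.

Lemma F1e2 n k : (k < 3 ^ n)%N ->
  F n.+1 (Posz (5 * 3 ^ n + k)%N) = F n (Posz (3 ^ n + k)%N) / 16.
Proof.
move=> hk; rewrite F_rec; zF.
rewrite (_ : Posz (5 * 3 ^ n + k)%N - Posz (4 * 3 ^ n)%N = Posz (3 ^ n + k)%N); [|lia]. lra.
Qed.

Definition c0 := F 0 (Posz 0) + F 0 (Posz 1).

Lemma c0_ge0 : 0 <= c0.
Proof. by rewrite /c0; have := F_ge0 0 0; have := F_ge0 0 1; lra. Qed.

Lemma L1 n k : (k < 3 ^ n)%N ->
  (5/16) ^+ n * c0 <= F n (Posz k) + F n (Posz (3 ^ n + k)%N).
Proof.
elim: n k => [|n IH] k hk.
  rewrite expn0 in hk; have -> : k = 0%N by lia.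
  by rewrite expr0 mul1r expn0 addn0.
have hc := c0_ge0.
rewrite exprS -mulrA.
case: (ltnP k (3 ^ n)) => h1.
  have E1 : Posz (3 ^ n.+1 + k)%N = Posz (3 * 3 ^ n + k)%N by rewrite expnS.
  rewrite E1 F0e0 // F1e0 //.
  have := IH k h1; have := F_ge0 n (Posz k); have := F_ge0 n (Posz (3 ^ n + k)%N); lra.
case: (ltnP k (2 * 3 ^ n)) => h2.
  have E0 : Posz k = Posz (3 ^ n + (k - 3 ^ n))%N by lia.
  have E1 : Posz (3 ^ n.+1 + k)%N = Posz (4 * 3 ^ n + (k - 3 ^ n))%N by rewrite expnS; lia.
  have hk' : (k - 3 ^ n < 3 ^ n)%N by lia.
  rewrite E1 E0 F0e1 // F1e1 //.
  have := IH _ hk'; have := F_ge0 n (Posz (k - 3 ^ n)%N); have := F_ge0 n (Posz (3 ^ n + (k - 3 ^ n))%N); lra.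
have E0 : Posz k = Posz (2 * 3 ^ n + (k - 2 * 3 ^ n))%N by lia.
have E1 : Posz (3 ^ n.+1 + k)%N = Posz (5 * 3 ^ n + (k - 2 * 3 ^ n))%N by rewrite expnS; lia.
have hk' : (k - 2 * 3 ^ n < 3 ^ n)%N by rewrite expnS in hk; lia.
rewrite E1 E0 F0e2 // F1e2 //.
have := IH _ hk'; have := F_ge0 n (Posz (k - 2 * 3 ^ n)%N); have := F_ge0 n (Posz (3 ^ n + (k - 2 * 3 ^ n))%N); lra.
Qed.

Lemma pow_le m : (1/16) ^+ m <= (5/16) ^+ m :> R.
Proof.
elim: m => [|m IH]; first by rewrite !expr0.
rewrite !exprS; apply: ler_pM => //; try lra; apply: exprn_ge0; lra.
Qed.

Lemma pow_aux m t : (1/16) ^+ m.+1 * (5/16) ^+ t * c0 <= 1/16 * ((5/16) ^+ (m + t) * c0) :> R.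
Proof.
rewrite exprS exprD.
have h : 0 <= (5/16) ^+ t * c0 :> R by apply: mulr_ge0; [apply: exprn_ge0; lra| exact: c0_ge0].
have := ler_wpM2r h (pow_le m).
lra.
Qed.

Lemma L2 m t k : (3 ^ t <= k < 3 ^ (m + t))%N ->
  (1/16) ^+ m * (5/16) ^+ t * c0 <= F (m + t) (Posz k).
Proof.
elim: m k => [|m IH] k hk; first by rewrite add0n in hk; lia.
rewrite addSn; rewrite addSn expnS in hk.
have hc := c0_ge0.
have ha := pow_aux m t.
set n := (m + t)%N in IH hk ha *.
case: (ltnP k (3 ^ n)) => h1.
  rewrite F0e0 // exprS.
  have : (3 ^ t <= k < 3 ^ n)%N by lia.
  move=> /IH; lra.
case: (ltnP k (2 * 3 ^ n)) => h2.
  have E0 : Posz k = Posz (3 ^ n + (k - 3 ^ n))%N by lia.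
  have hk' : (k - 3 ^ n < 3 ^ n)%N by lia.
  rewrite E0 F0e1 //.
  have := L1 _ _ hk'; have := F_ge0 n (Posz (k - 3 ^ n)%N); have := F_ge0 n (Posz (3 ^ n + (k - 3 ^ n))%N); lra.
have E0 : Posz k = Posz (2 * 3 ^ n + (k - 2 * 3 ^ n))%N by lia.
have hk' : (k - 2 * 3 ^ n < 3 ^ n)%N by lia.
rewrite E0 F0e2 //.
have := L1 _ _ hk'; have := F_ge0 n (Posz (k - 2 * 3 ^ n)%N); have := F_ge0 n (Posz (3 ^ n + (k - 2 * 3 ^ n))%N); lra.
Qed.

Lemma L3 m t k : (k + 3 ^ t < 3 ^ (m + t))%N ->
  (1/16) ^+ m * (5/16) ^+ t * c0 <= F (m + t) (Posz (3 ^ (m + t) + k)%N).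
Proof.
elim: m k => [|m IH] k hk; first by rewrite add0n in hk; lia.
rewrite addSn; rewrite addSn expnS in hk.
have hc := c0_ge0.
have ha := pow_aux m t.
set n := (m + t)%N in IH hk ha *.
case: (ltnP k (3 ^ n)) => h1.
  have E1 : Posz (3 ^ n.+1 + k)%N = Posz (3 * 3 ^ n + k)%N by rewrite expnS.
  rewrite E1 F1e0 //.
  have := L1 _ _ h1; have := F_ge0 n (Posz k); have := F_ge0 n (Posz (3 ^ n + k)%N); lra.
case: (ltnP k (2 * 3 ^ n)) => h2.
  have E1 : Posz (3 ^ n.+1 + k)%N = Posz (4 * 3 ^ n + (k - 3 ^ n))%N by rewrite expnS; lia.
  have hk' : (k - 3 ^ n < 3 ^ n)%N by lia.
  rewrite E1 F1e1 //.
  have := L1 _ _ hk'; have := F_ge0 n (Posz (k - 3 ^ n)%N); have := F_ge0 n (Posz (3 ^ n + (k - 3 ^ n))%N); lra.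
have E1 : Posz (3 ^ n.+1 + k)%N = Posz (5 * 3 ^ n + (k - 2 * 3 ^ n))%N by rewrite expnS; lia.
have hk' : (k - 2 * 3 ^ n + 3 ^ t < 3 ^ n)%N by lia.
have hk'' : (k - 2 * 3 ^ n < 3 ^ n)%N by lia.
rewrite E1 F1e2 // exprS.
move: (IH _ hk'); lra.
Qed.

Fixpoint u (n : nat) : nat := if n is n'.+1 then (3 ^ n' + u n')%N else 0%N.

Lemma u_eq n : (2 * u n + 1 = 3 ^ n)%N.
Proof. elim: n => [//|n IH] /=; rewrite expnS; lia. Qed.

Lemma u_lt n : (u n < 3 ^ n)%N.
Proof. have := u_eq n; lia. Qed.

Lemma half_S n : F n (Posz (u n)) + F n (Posz (3 ^ n + u n)%N) = (5/16) ^+ n * c0.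
Proof.
elim: n => [|n IH]; first by rewrite expr0 mul1r /c0 expn0.
have E1 : Posz (3 ^ n.+1 + u n.+1)%N = Posz (4 * 3 ^ n + u n)%N by rewrite /= expnS; lia.
rewrite E1 /= F0e1 ?u_lt // F1e1 ?u_lt // exprS -mulrA -IH.
lra.
Qed.

Lemma half_hi n : F n (Posz (u n)) <= (5/16) ^+ n * c0.
Proof. rewrite -half_S; have := F_ge0 n (Posz (3 ^ n + u n)%N); lra. Qed.

Lemma half_lo n : 1/16 * ((5/16) ^+ n * c0) <= F n.+1 (Posz (u n.+1)).
Proof.
rewrite /= F0e1 ?u_lt // -half_S.
have := F_ge0 n (Posz (u n)); have := F_ge0 n (Posz (3 ^ n + u n)%N); lra.
Qed.

Lemma mball (x r : R) : measurable (ball x r).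
Proof. rewrite ball_itv; exact: measurable_itv. Qed.

Lemma u_end n : (Posz (u n))%:~R / 3 ^+ n = 1/2 - (3 ^+ n)^-1 / 2 :> R /\
                (Posz (u n) + 1)%:~R / 3 ^+ n = 1/2 + (3 ^+ n)^-1 / 2 :> R.
Proof.
have h3 : 3 ^+ n != 0 :> R by apply: lt0r_neq0; apply: exprn_gt0.
have Eu : (u n)%:R = (3 ^+ n - 1) / 2 :> R.
  have := u_eq n => /(congr1 (fun k : nat => k%:R : R)); rewrite natrD natrM natrX => h.
  by rewrite -h; field.
by rewrite intrD !intrP Eu; split; field.
Qed.

Lemma ball_half n : ball (1/2 : R) ((3 ^+ n)^-1 / 2) `<=` I n (Posz (u n)).
Proof.
have [E1 E2] := u_end n.
move=> y; rewrite ball_itv /I /= !in_itv /= E1 E2 => /andP[h1 h2].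
by apply/andP; split; lra.
Qed.

Lemma half_ball n : I n.+1 (Posz (u n.+1)) `<=` ball (1/2 : R) ((3 ^+ n)^-1 / 2).
Proof.
have [E1 E2] := u_end n.+1.
have hw0 : 0 < (3 ^+ n)^-1 :> R by rewrite invr_gt0 exprn_gt0.
have hw : (3 ^+ n.+1)^-1 = (3 ^+ n)^-1 / 3 :> R by rewrite exprS invfM mulrC.
move=> y; rewrite ball_itv /I /= !in_itv /= E1 E2 => /andP[h1 h2].
by apply/andP; split; lra.
Qed.

Lemma c0_le2 : c0 <= 2.
Proof. by rewrite /c0; have := F_le1 0 0; have := F_le1 0 1; lra. Qed.

Lemma muF n j : mu (I n j) = (F n j)%:E.
Proof. by rewrite /F fineK // mu_fin //; exact: mI. Qed.

Lemma c0_ge1 : 1 <= c0.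
Proof.
pose A := `]-oo, 0]%classic : set R; pose D := `[2, +oo[%classic : set R.
pose B := I 0 (Posz 0); pose C := I 0 (Posz 1).
have mA : measurable A by exact: measurable_itv.
have mD : measurable D by exact: measurable_itv.
have mB : measurable B by exact: mI.
have mC : measurable C by exact: mI.
have cover : [set: R] `<=` A `|` B `|` C `|` D.
  move=> y _; rewrite /A /D /B /C /I /= !in_itv /= !expr0 !divr1.
  have z0 : (Posz 0)%:~R = 0 :> R by [].
  have z1 : (Posz 0 + 1)%:~R = 1 :> R by [].
  have z1' : (Posz 1)%:~R = 1 :> R by [].
  have z2 : (Posz 1 + 1)%:~R = 2 :> R by [].
  rewrite ?z0 ?z1 ?z1' ?z2.
  case: (lerP y 0) => h0; first by do 3 left.
  case: (ltrP y 1) => h1; first by left; left; right; apply/andP; split => //; exact: ltW.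
  case: (ltrP y 2) => h2; first by left; right; apply/andP; split.
  by right; rewrite andbT.
have h1 : (mu [set: R] <= mu (A `|` B `|` C `|` D))%E.
  by apply: le_measure => //; rewrite inE //; do 3 apply: measurableU => //.
have mAB : measurable (A `|` B) by apply: measurableU.
have mABC : measurable (A `|` B `|` C) by apply: measurableU.
have h2 : (mu (A `|` B `|` C `|` D) <= mu (A `|` B `|` C) + mu D)%E by apply: measureU2.
have h3 : (mu (A `|` B `|` C) <= mu (A `|` B) + mu C)%E by apply: measureU2.
have h4 : (mu (A `|` B) <= mu A + mu B)%E by apply: measureU2.
have hT : mu [set: R] = 1%E by case: H.
have : (1 <= mu A + mu B + mu C + mu D)%E.
  rewrite -hT; apply: (le_trans h1); apply: (le_trans h2); apply: leeD2r.
  apply: (le_trans h3); apply: leeD2r; exact: h4.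
rewrite /A /D left_null right_null /B /C !muF add0e adde0 -EFinD lee_fin.
by rewrite /c0.
Qed.

Lemma supp_in x : msupp mu x -> 0 <= x <= 2.
Proof.
move=> hs; apply/andP; split.
- rewrite leNgt; apply/negP => hx.
  have h2 : (0 < mu (ball x (- x)))%E by apply: hs; rewrite oppr_gt0.
  pose A : set R := `]-oo, 0]%classic.
  have : (mu (ball x (- x)) <= mu A)%E.
    apply: le_measure; rewrite ?inE; [exact: mball | exact: measurable_itv|].
    by move=> y; rewrite /A ball_itv /= !in_itv /= => /andP[_ h]; lra.
  by rewrite /A left_null => h1; have := lt_le_trans h2 h1; rewrite ltxx.
- rewrite leNgt; apply/negP => hx.
  have h2 : (0 < mu (ball x (x - 2)))%E by apply: hs; rewrite subr_gt0.
  pose A : set R := `[2, +oo[%classic.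
  have : (mu (ball x (x - 2)) <= mu A)%E.
    apply: le_measure; rewrite ?inE; [exact: mball | exact: measurable_itv|].
    by move=> y; rewrite /A ball_itv /= !in_itv /= andbT => /andP[h _]; lra.
  by rewrite /A right_null => h1; have := lt_le_trans h2 h1; rewrite ltxx.
Qed.

Lemma F_zero n : F n (Posz 0) = (1/16) ^+ n * F 0 (Posz 0).
Proof.
elim: n => [|n IH]; first by rewrite expr0 mul1r.
by rewrite F0e0 ?expn_gt0 // IH exprS; lra.
Qed.

Lemma F_two n : F n (Posz (2 * 3 ^ n - 1)%N) = (1/16) ^+ n * F 0 (Posz 1).
Proof.
elim: n => [|n IH]; first by rewrite expr0 mul1r.
have h3 := expn_gt0 3 n.
have E : Posz (2 * 3 ^ n.+1 - 1)%N = Posz (5 * 3 ^ n + (3 ^ n - 1))%N by rewrite expnS; lia.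
have E2 : Posz (3 ^ n + (3 ^ n - 1))%N = Posz (2 * 3 ^ n - 1)%N by lia.
rewrite E F1e2; last by lia.
by rewrite E2 IH exprS; lra.
Qed.

Definition w n : R := (3 ^+ n)^-1.

Lemma w_gt0 n : 0 < w n.
Proof. by rewrite /w invr_gt0 exprn_gt0. Qed.

Lemma I_end n (k : nat) : I n (Posz k) = `[k%:R * w n, k%:R * w n + w n[%classic.
Proof.
have h3 : 3 ^+ n != 0 :> R by apply: lt0r_neq0; apply: exprn_gt0.
have one : (1:int)%:~R = 1 :> R by [].
rewrite /I /w intrD !intrP ?one.
by rewrite mulrDl mul1r.
Qed.

Lemma I_ball n k x : I n (Posz k) x -> I n (Posz k) `<=` ball x (w n).
Proof.
rewrite I_end /= in_itv /= => /andP[h1 h2] y.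
by rewrite ball_itv /= !in_itv /= => /andP[h3 h4]; apply/andP; split; lra.
Qed.

Lemma mF_lo n k x : I n (Posz k) x -> F n (Posz k) <= fine (mu (ball x (w n))).
Proof. by move=> hx; apply: fine_mono; [exact: mI | exact: mball | exact: I_ball]. Qed.

Lemma fine_sub2 A B C : measurable A -> measurable B -> measurable C -> A `<=` B `|` C ->
  fine (mu A) <= fine (mu B) + fine (mu C).
Proof.
move=> mA mB mC h; rewrite -lee_fin EFinD !fineK ?mu_fin //.
apply: (le_trans (le_measure _ _ _ h)); rewrite ?inE //; first exact: measurableU.
exact: measureU2.
Qed.

Lemma ball0 n : fine (mu (ball 0 (w n))) = (1/16) ^+ n * F 0 (Posz 0).
Proof.
rewrite -F_zero; apply/eqP; rewrite eq_le; apply/andP; split; last first.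
  by apply: mF_lo; rewrite I_end /= in_itv /= mulr0n mul0r add0r lexx w_gt0.
have := fine_sub2 _ _ _ (mball 0 (w n)) (measurable_itv `]-oo, 0]) (mI n (Posz 0)).
rewrite left_null /= add0r; apply.
move=> y; rewrite ball_itv I_end /= !in_itv /= ?mulr0n ?mul0r ?add0r ?sub0r => /andP[h1 h2].
by case: (lerP y 0) => h; [left | right; apply/andP; split; lra].
Qed.

Lemma ball2_hi n : fine (mu (ball (2:R) (w n))) <= (1/16) ^+ n * F 0 (Posz 1).
Proof.
have h3 := expn_gt0 3 n.
rewrite -F_two.
have := fine_sub2 _ _ _ (mball (2:R) (w n)) (mI n (Posz (2 * 3 ^ n - 1)%N)) (measurable_itv `[2, +oo[).
rewrite right_null /= addr0; apply.
have E : (2 * 3 ^ n - 1)%:R * w n = 2 - w n.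
  rewrite natrB; last by lia.
  by rewrite natrM natrX /w; field; apply: lt0r_neq0; apply: exprn_gt0.
move=> y; rewrite ball_itv I_end /= !in_itv /= E andbT => /andP[h1 h2].
by case: (ltrP y 2) => h; [left; apply/andP; split; lra | right].
Qed.

Lemma ball2_lo n : (1/16) ^+ n.+1 * F 0 (Posz 1) <= fine (mu (ball (2:R) (w n))).
Proof.
have h3 := expn_gt0 3 n.+1.
rewrite -F_two.
have e : w n.+1 = w n / 3 by rewrite /w exprS invfM mulrC.
have hw := w_gt0 n.
have E : (2 * 3 ^ n.+1 - 1)%:R * w n.+1 = 2 - w n.+1.
  rewrite natrB; last by lia.
  by rewrite natrM natrX /w; field; apply: lt0r_neq0; apply: exprn_gt0.
apply: fine_mono; [exact: mI | exact: mball |].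
move=> y; rewrite I_end /= in_itv /= E ball_itv /= in_itv /= e => /andP[h1 h2].
by apply/andP; split; lra.
Qed.

Lemma pow_lo m t : (1/16) ^+ m * (5/16) ^+ t <= (1/16) ^+ m * (5/16) ^+ t * c0 :> R.
Proof.
have h : 0 <= (1/16) ^+ m * (5/16) ^+ t :> R by apply: mulr_ge0; apply: exprn_ge0; lra.
have := c0_ge1; have := ler_wpM2l h c0_ge1; lra.
Qed.

Lemma gen_lo (x : R) : 0 < x < 2 -> exists m : nat, forall t : nat,
  (1/16) ^+ m * (5/16) ^+ t <= fine (mu (ball x (w (m + t)))).
Proof.
move=> /andP[x0 x2].
case: (ltrP x 1) => x1.
- have [m hm] := big_pow 1 x x0.
  exists m => t; set n := (m + t)%N.
  have h3n : 0 < 3 ^+ n :> R by apply: exprn_gt0.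
  have h3t : 0 < 3 ^+ t :> R by apply: exprn_gt0.
  have wn : w n * 3 ^+ n = 1 by rewrite /w mulVf // gt_eqF.
  pose y := x * 3 ^+ n.
  have y0 : 0 <= y by rewrite /y mulr_ge0 // ltW.
  have /andP[hk1 hk2] := truncn_itv y0.
  set k := Num.Def.trunc y in hk1 hk2.
  have yt : 3 ^+ t < y.
    rewrite /y /n exprD mulrA; have := ltr_pM2r h3t; move=> e; rewrite -[X in X < _]mul1r e.
    by rewrite mulrC.
  have k1 : (3 ^ t <= k)%N.
    have : (3 ^ t)%:R < k.+1%:R :> R by rewrite natrX; lra.
    by rewrite ltr_nat.
  have k2 : (k < 3 ^ n)%N.
    have hy : y < 3 ^+ n by rewrite /y -[X in _ < X]mul1r ltr_pM2r.
    have : k%:R < (3 ^ n)%:R :> R by rewrite natrX; lra.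
    by rewrite ltr_nat.
  have L := L2 m t k (introT andP (conj k1 k2)).
  have xin : I n (Posz k) x.
    rewrite I_end /= in_itv /=.
    have wp := w_gt0 n.
    have ex : x = y * w n by rewrite /y -mulrA [3 ^+ n * _]mulrC wn mulr1.
    have a1 : k%:R * w n <= y * w n by rewrite ler_pM2r.
    have a2 : y * w n < k.+1%:R * w n by rewrite ltr_pM2r.
    rewrite -natr1 mulrDl mul1r in a2.
    by apply/andP; split; lra.
  have := mF_lo _ _ _ xin; have := pow_lo m t; lra.
- have x2' : 0 < 2 - x by lra.
  have [m hm] := big_pow 1 (2 - x) x2'.
  exists m => t; set n := (m + t)%N.
  have h3n : 0 < 3 ^+ n :> R by apply: exprn_gt0.
  have h3t : 0 < 3 ^+ t :> R by apply: exprn_gt0.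
  have wn : w n * 3 ^+ n = 1 by rewrite /w mulVf // gt_eqF.
  pose y := (x - 1) * 3 ^+ n.
  have y0 : 0 <= y by rewrite /y; apply: mulr_ge0; [lra | exact: ltW].
  have /andP[hk1 hk2] := truncn_itv y0.
  set k := Num.Def.trunc y in hk1 hk2.
  have yt : 3 ^+ t < (2 - x) * 3 ^+ n.
    rewrite /n exprD mulrA; have := ltr_pM2r h3t; move=> e; rewrite -[X in X < _]mul1r e.
    by rewrite mulrC.
  have ey : y = 3 ^+ n - (2 - x) * 3 ^+ n by rewrite /y; ring.
  have k1 : (k + 3 ^ t < 3 ^ n)%N.
    have : (k + 3 ^ t)%:R < (3 ^ n)%:R :> R by rewrite natrD !natrX; lra.
    by rewrite ltr_nat.
  have L := L3 m t k k1.
  have xin : I n (Posz (3 ^ n + k)%N) x.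
    rewrite I_end /= in_itv /=.
    have wp := w_gt0 n.
    have ex : x = 1 + y * w n by rewrite /y -mulrA [3 ^+ n * _]mulrC wn mulr1; ring.
    have a1 : k%:R * w n <= y * w n by rewrite ler_pM2r.
    have a2 : y * w n < k.+1%:R * w n by rewrite ltr_pM2r.
    rewrite -natr1 mulrDl mul1r in a2.
    have e3 : (3 ^ n + k)%:R * w n = 1 + k%:R * w n by rewrite natrD natrX mulrDl mulrC wn.
    by rewrite e3; apply/andP; split; lra.
  have := mF_lo _ _ _ xin; have := pow_lo m t; lra.
Qed.

Lemma mhalf_hi n : fine (mu (ball (1/2 : R) ((3 ^+ n)^-1 / 2))) <= (5/16) ^+ n * c0.
Proof.
apply: le_trans (half_hi n); apply: fine_mono; [exact: mball | exact: mI | exact: ball_half].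
Qed.

Lemma mhalf_lo n : 1/16 * ((5/16) ^+ n * c0) <= fine (mu (ball (1/2 : R) ((3 ^+ n)^-1 / 2))).
Proof.
apply: le_trans (half_lo n) _; apply: fine_mono; [exact: mI | exact: mball | exact: half_ball].
Qed.

Lemma lnpow (x : R) n : 0 < x -> ln (x ^+ n) = n%:R * ln x.
Proof. by move=> x0; rewrite lnXn // mulr_natl. Qed.

Lemma discr (r : R) : 0 < r < 1/2 -> exists n, (3 ^+ n.+1)^-1 / 2 < r <= (3 ^+ n)^-1 / 2.
Proof.
move=> /andP[r0 r2].
have r0' : 0 < 2 * r by lra.
have [N hN] := big_pow 1 (2 * r) r0'.
have h3 : 0 < 3 ^+ N :> R by apply: exprn_gt0.
pose P := fun n : nat => r <= (3 ^+ n)^-1 / 2.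
have P0 : P 0%N by rewrite /P expr0 invr1; lra.
have PN : ~~ P N.
  rewrite /P -ltNge ltr_pdivrMr // -(ltr_pM2l h3) mulfV ?gt_eqF //; lra.
have [n /andP[h1 h2]] := find_step P N P0 PN.
exists n; rewrite /P -ltNge in h2; by rewrite h2.
Qed.

Lemma locdim_half : has_locdim mu (1/2) (ln (16/5) / ln 3).
Proof.
pose A := ln (16/5 : R); pose L := ln (3 : R).
have L0 : 0 < L by apply: ln3_gt0.
have A0 : 0 < A by apply: ln_gt0; lra.
have l20 : 0 <= ln (2 : R) by apply: ln_ge0; lra.
have l160 : 0 <= ln (16 : R) by apply: ln_ge0; lra.
have l516 : ln (5/16 : R) = - A.
  by rewrite /A -lnV ?posrE // invf_div.
have l116 : ln (1/16 : R) = - ln 16 by rewrite div1r lnV ?posrE.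
rewrite /has_locdim.
apply: (cvg_core _ _
   (ln 16 + ln 2 + A + A / L * ln 2) (1/2)); first lra.
  have : 0 <= A / L * ln 2 by apply: mulr_ge0 => //; apply: divr_ge0; apply: ltW.
  lra.
move=> r hr; have [n /andP[h1 h2]] := discr r hr.
move: hr => /andP[r0 r2].
have hc1 := c0_ge1; have hc2 := c0_le2.
have p0 : 0 < (5/16) ^+ n :> R by apply: exprn_gt0; lra.
have p1 : 0 < (5/16) ^+ n.+1 :> R by apply: exprn_gt0; lra.
set m := fine (mu (ball (1/2 : R) r)).
have mlo : 1/16 * (5/16) ^+ n.+1 <= m.
  have a1 := mhalf_lo n.+1.
  have a2 : fine (mu (ball (1/2 : R) ((3 ^+ n.+1)^-1 / 2))) <= m.
    by apply: fine_mono; [exact: mball | exact: mball | apply: le_ball; exact: ltW].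
  have a3 : (5/16) ^+ n.+1 <= (5/16) ^+ n.+1 * c0 :> R by rewrite ler_peMr // ltW.
  lra.
have mhi : m <= 2 * (5/16) ^+ n.
  have b1 := mhalf_hi n.
  have b2 : m <= fine (mu (ball (1/2 : R) ((3 ^+ n)^-1 / 2))).
    by apply: fine_mono; [exact: mball | exact: mball | exact: le_ball].
  have b3 : (5/16) ^+ n * c0 <= (5/16) ^+ n * 2 :> R by rewrite ler_pM2l.
  lra.
have q0 : 0 < 1/16 * (5/16) ^+ n.+1 :> R by apply: mulr_gt0 => //; lra.
have m0 : 0 < m by exact: lt_le_trans q0 mlo.
have h516 : 0 < 5/16 :> R by lra.
have e16 : 0 < 1/16 :> R by lra.
have lm1 : - ln 16 - (n%:R + 1) * A <= ln m.
  have hln : ln (1/16 * (5/16) ^+ n.+1) <= ln m by rewrite ler_ln ?posrE.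
  have lnq : ln (1/16 * (5/16) ^+ n.+1 : R) = - ln 16 - (n%:R + 1) * A.
    by rewrite lnM ?posrE // l116 (lnpow _ _ h516) l516 -natr1; ring.
  by rewrite -lnq.
have q2 : 0 < 2 * (5/16) ^+ n :> R by apply: mulr_gt0.
have lm2 : ln m <= ln 2 - n%:R * A.
  have hln : ln m <= ln (2 * (5/16) ^+ n) by rewrite ler_ln ?posrE.
  have lnq : ln (2 * (5/16) ^+ n : R) = ln 2 - n%:R * A.
    by rewrite lnM ?posrE // (lnpow _ _ h516) l516; ring.
  by rewrite -lnq.
have h3n : 0 < 3 ^+ n :> R by apply: exprn_gt0.
have h3n1 : 0 < 3 ^+ n.+1 :> R by apply: exprn_gt0.
have lrho k : 0 < 3 ^+ k :> R -> ln ((3 ^+ k)^-1 / 2) = - (k%:R * L) - ln 2.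
  move=> hk; rewrite lnM ?posrE ?invr_gt0 // lnV ?posrE // lnV ?posrE // lnpow //.
have r1p : 0 < (3 ^+ n.+1)^-1 / 2 :> R by apply: divr_gt0; rewrite ?invr_gt0.
have r2p : 0 < (3 ^+ n)^-1 / 2 :> R by apply: divr_gt0; rewrite ?invr_gt0.
have lr1 : - ((n%:R + 1) * L) - ln 2 < ln r.
  have hln : ln ((3 ^+ n.+1)^-1 / 2) < ln r by rewrite ltr_ln ?posrE.
  by rewrite lrho // -natr1 in hln.
have lr2 : ln r <= - (n%:R * L) - ln 2.
  have hln : ln r <= ln ((3 ^+ n)^-1 / 2) by rewrite ler_ln ?posrE.
  by rewrite lrho // in hln.
exact: (@alg R n%:R _ _ _ _ _ _ L0 A0 l20 l160 (ler0n _ n) lm1 lm2 lr1 lr2).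
Qed.

Lemma ln16 : ln (16 : R) = 4 * ln 2.
Proof.
have e : (2 : R) ^+ 4 = 16 by rewrite !exprS expr0; lra.
by rewrite -e lnpow //; lra.
Qed.

Lemma mu_pos (A : set R) : measurable A -> 0 < fine (mu A) -> (0 < mu A)%E.
Proof. by move=> mA h; rewrite -(fineK (mu_fin mA)) lte_fin. Qed.

Lemma supp_half : msupp mu (1/2).
Proof.
move=> r r0.
have r0' : 0 < 2 * r by lra.
have [n hn] := big_pow 1 (2 * r) r0'.
have h3 : 0 < 3 ^+ n :> R by apply: exprn_gt0.
have hr : (3 ^+ n)^-1 / 2 <= r.
  apply: ltW; rewrite ltr_pdivrMr // -(ltr_pM2l h3) mulfV ?gt_eqF //; lra.
apply: mu_pos; first exact: mball.
have a1 := mhalf_lo n.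
have a2 : fine (mu (ball (1/2 : R) ((3 ^+ n)^-1 / 2))) <= fine (mu (ball (1/2 : R) r)).
  by apply: fine_mono; [exact: mball | exact: mball | exact: le_ball].
have p : 0 < 1/16 * ((5/16) ^+ n * c0) :> R.
  apply: mulr_gt0; first lra.
  apply: mulr_gt0; [apply: exprn_gt0; lra | have := c0_ge1; lra].
lra.
Qed.

Lemma mm_rad (x : R) n : fine (mu (ball x (rad n))) = fine (mu (ball x (w n.+1))).
Proof. by rewrite rad_eq. Qed.

Lemma dims_le l x : msupp mu x -> has_locdim mu x l -> l != 4 * ln 2 / ln 3 ->
  l <= ln (16/5) / ln 3.
Proof.
move=> hs hl hne.
have /andP[x0 x2] := supp_in x hs.
have hseq := seq_locdim _ _ _ hl.
have e16 : - ln (1/16 : R) / ln 3 = 4 * ln 2 / ln 3.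
  by rewrite div1r lnV ?posrE // opprK ln16.
have h116 : 0 < 1/16 :> R by lra.
case: (eqVneq x 0) => [xe|xn0].
  subst x.
  have a0 : 0 < F 0 (Posz 0).
    rewrite lt_neqAle F_ge0 andbT; apply/negP => /eqP a0.
    have := hs (w 0) (w_gt0 0); rewrite -(fineK (mu_fin (mball _ _))) ball0 -a0 mulr0 lte_fin ltxx //.
  have u1 := @A1 R (fun n => fine (mu (ball 0 (rad n)))) l _ _ 0%N a0 h116 hseq.
  have u2 := @A2 R (fun n => fine (mu (ball 0 (rad n)))) l _ _ 0%N a0 h116 hseq.
  have := u1; have := u2.
  rewrite e16 => v2 v1.
  have : l = 4 * ln 2 / ln 3.
    apply/eqP; rewrite eq_le; apply/andP; split.
      apply: v1 => n _; by rewrite mm_rad ball0 mulrC.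
    apply: v2 => n _; rewrite mm_rad ball0 mulrC; split => //.
    by apply: mulr_gt0 => //; apply: exprn_gt0.
  by move=> ee; rewrite ee eqxx in hne.
case: (eqVneq x 2) => [xe|xn2].
  subst x.
  have b0 : 0 < F 0 (Posz 1).
    rewrite lt_neqAle F_ge0 andbT; apply/negP => /eqP b0.
    have := hs (w 0) (w_gt0 0); rewrite -(fineK (mu_fin (mball _ _))) lte_fin.
    have := ball2_hi 0; rewrite -b0 mulr0 => h h'; have := lt_le_trans h' h; rewrite ltxx //.
  have b0' : 0 < F 0 (Posz 1) / 16 by apply: divr_gt0.
  have u1 := @A1 R (fun n => fine (mu (ball (2:R) (rad n)))) l _ _ 0%N b0' h116 hseq.
  have u2 := @A2 R (fun n => fine (mu (ball (2:R) (rad n)))) l _ _ 0%N b0 h116 hseq.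
  have := u1; have := u2.
  rewrite e16 => v2 v1.
  have : l = 4 * ln 2 / ln 3.
    apply/eqP; rewrite eq_le; apply/andP; split.
      apply: v1 => n _; rewrite mm_rad; have := ball2_lo n.+1.
      by rewrite exprS; lra.
    apply: v2 => n _; rewrite mm_rad; split; last by rewrite mulrC; exact: ball2_hi.
    have := ball2_lo n.+1; have : 0 < (1/16) ^+ n.+2 * F 0 (Posz 1) :> R.
      by apply: mulr_gt0 => //; apply: exprn_gt0.
    lra.
  by move=> ee; rewrite ee eqxx in hne.
have xin : 0 < x < 2 by rewrite lt_neqAle eq_sym xn0 x0 /= lt_neqAle xn2 x2.
have [m hm] := gen_lo x xin.
have c0 : 0 < (1/5) ^+ m :> R by apply: exprn_gt0; lra.
have h516 : 0 < 5/16 :> R by lra.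
have := @A1 R (fun n => fine (mu (ball x (rad n)))) l _ _ m c0 h516 hseq.
have -> : - ln (5/16 : R) = ln (16/5) by rewrite -lnV ?posrE // invf_div.
apply => n hn; rewrite mm_rad.
have E : n.+1 = (m + (n.+1 - m))%N by lia.
rewrite {2}E.
have := hm (n.+1 - m)%N.
have -> : (1/5) ^+ m * (5/16) ^+ n.+1 = (1/16) ^+ m * (5/16) ^+ (n.+1 - m) :> R.
  rewrite {1}E exprD mulrA -exprMn; congr (_ ^+ _ * _); lra.
by [].
Qed.
End S.

Theorem lemma20 (R : realType) (mu : {measure set R -> \bar R}) :
  self_similar_measure 3 4 (fun i => ('C(4, i))%:R / 16) mu ->
  sup (locdim_set mu `\ (4 * ln 2 / ln 3)) = ln (16 / 5) / ln 3 /\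
  msupp mu (1 / 2) /\ has_locdim mu (1 / 2) (ln (16 / 5) / ln 3).
Proof.
move=> H.
have hs := @supp_half R mu H.
have hd := @locdim_half R mu H.
have L0 : 0 < ln (3 : R) by apply: ln_gt0; lra.
have lt : ln (16/5) / ln 3 < 4 * ln 2 / ln 3 :> R.
  rewrite ltr_pM2r ?invr_gt0 //.
  have e : (2 : R) ^+ 4 = 16 by rewrite !exprS expr0; lra.
  have -> : 4 * ln (2 : R) = ln 16 by rewrite -e lnXn // mulr_natl.
  by rewrite ltr_ln ?posrE //; lra.
have ub : forall l, (locdim_set mu `\ (4 * ln 2 / ln 3)) l -> l <= ln (16/5) / ln 3.
  move=> l [[x hx hlx] hne]; apply: (@dims_le R mu H l x hx hlx).
  by apply/eqP => e; apply: hne; rewrite e.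
have inS : (locdim_set mu `\ (4 * ln 2 / ln 3)) (ln (16/5) / ln 3).
  split; first by exists (1/2).
  by move=> /= e; rewrite e ltxx in lt.
split; last by split.
apply/eqP; rewrite eq_le; apply/andP; split.
- by apply: ge_sup; [exists (ln (16/5) / ln 3) | exact: ub].
- apply: sup_upper_bound => //; split; first by exists (ln (16/5) / ln 3).
  by exists (ln (16/5) / ln 3).
Qed.
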